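(* Let $n\geq2$, $H=\{x\in\mathbb{R}^{n+1}:\sum_i x_i=0\}$, $p_H$ the orthogonal projection onto $H$, $V_{\mathcal{P}}=p_H(\{0,1\}^{n+1}\setminus\{(0,\dots,0),(1,\dots,1)\})$ (the vertex set of the Voronoi region of $A_n=\mathbb{Z}^{n+1}\cap H$), and let $\tilde G$ be the Cayley graph on $\frac12p_H(\mathbb{Z}^{n+1})$ with generating set $\frac12V_{\mathcal{P}}$. Then every clique $C$ of $\tilde G$ satisfies $\delta^0(C)=\frac{|C|}{|N[C]|}\leq\frac{1}{2^n}$.
   Context: In the Cayley graph, $x,y$ are adjacent iff $x-y\in\frac12V_{\mathcal{P}}$. A clique is a set of vertices any two distinct elements of which are adjacent. $N[C]=C+(\{0\}\cup\frac12V_{\mathcal{P}})$ is the closed neighborhood of $C$ in $\tilde G$. *)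

(* Defs.v *)
From HB Require Import structures.
From mathcomp Require Import all_boot all_order all_algebra.
From mathcomp Require Import reals.
Set Implicit Arguments. Unset Strict Implicit. Unset Printing Implicit Defensive.
Import Order.TTheory GRing.Theory Num.Theory.
Local Open Scope ring_scope.

Section Defs.
Variables (R : realType) (n : nat).
Notation vec := 'rV[R]_(n.+1).

Definition pH (x : vec) : vec :=
  x - ((\sum_(i < n.+1) x 0 i) / (n.+1)%:R) *: const_mx 1.

Definition vec01 (f : {ffun 'I_(n.+1) -> bool}) : vec := \row_i (f i)%:R.

Definition VP : seq vec :=
  [seq pH (vec01 f) | f <- enum {ffun 'I_(n.+1) -> bool}
     & (f != [ffun => false]) && (f != [ffun => true])].

Definition halfVP : seq vec := [seq (2%:R)^-1 *: v | v <- VP].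

Definition vertex (x : vec) : Prop :=
  exists z : 'rV[int]_(n.+1), x = (2%:R)^-1 *: pH (map_mx (fun k : int => k%:~R) z).

Definition adjacent (x y : vec) : bool := (x - y) \in halfVP.

Definition clique (C : seq vec) : Prop :=
  uniq C /\ (forall x, x \in C -> vertex x) /\
  (forall x y, x \in C -> y \in C -> x != y -> adjacent x y).

Definition closedNbhd (C : seq vec) : seq vec :=
  undup [seq c + v | c <- C, v <- 0 :: halfVP].

Definition delta0 (C : seq vec) : R :=
  (size C)%:R / (size (closedNbhd C))%:R.
End Defs.

(* Main.v *)
Require Import Defs.
From HB Require Import structures.
From mathcomp Require Import all_boot all_order all_algebra.
From mathcomp Require Import reals.
From mathcomp Require Import lra zify.
Import Order.TTheory GRing.Theory Num.Theory.
Local Open Scope ring_scope.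

Section S.
Variables (R : realType) (n : nat).
Notation vec := 'rV[R]_(n.+1).

Definition hv (f : {ffun 'I_(n.+1) -> bool}) : vec := (2%:R)^-1 *: pH (vec01 R f).

Lemma hvE f j : hv f 0 j = (f j)%:R / 2 - (\sum_(i < n.+1) (f i)%:R) / (n.+1)%:R / 2.
Proof.
rewrite /hv /pH /vec01 !mxE.
under eq_bigr do rewrite mxE.
by rewrite mulr1 mulrC mulrBl.
Qed.

Lemma halfVP_form v : v \in halfVP R n -> exists (f : 'I_(n.+1) -> bool) (s : R),
  (forall j, v 0 j = (f j)%:R / 2 - s) /\ (exists j k, f j /\ ~~ f k).
Proof.
case/mapP => u /mapP [f]; rewrite mem_filter => /andP[/andP[f0 f1] _] -> ->.
exists f, ((\sum_(i < n.+1) (f i)%:R) / (n.+1)%:R / 2); split.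
  by move=> j; rewrite -hvE.
have [j fj] : exists j, f j.
  apply/existsP; apply: contraR f0 => /existsPn H; apply/eqP/ffunP => i.
  by rewrite ffunE; apply/negbTE/H.
have [k fk] : exists k, ~~ f k.
  apply/existsP; apply: contraR f1 => /existsPn H; apply/eqP/ffunP => i.
  by rewrite ffunE; move/negPn: (H i).
by exists j, k.
Qed.

Variables (C : seq vec) (hC : clique C) (c0 : vec) (c0C : c0 \in C).

Lemma Pd x y j k : x \in C -> y \in C -> exists b1 b2 : bool,
  (x 0 j - y 0 j) - (x 0 k - y 0 k) = (b1%:R - b2%:R) / 2.
Proof.
move=> xC yC; have [->|nxy] := eqVneq x y.
  by exists false, false; rewrite /= !subrr mul0r.
case: hC => _ [_ /(_ x y xC yC nxy)] /halfVP_form [f [s [Hf _]]].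
exists (f j), (f k); move: (Hf j) (Hf k); rewrite !mxE => -> ->.
rewrite mulrBl; lra.
Qed.

Lemma NC x y : x \in C -> y \in C -> x != y ->
  exists j k, x 0 j - y 0 j < x 0 k - y 0 k.
Proof.
move=> xC yC nxy.
case: hC => _ [_ /(_ x y xC yC nxy)] /halfVP_form [f [s [Hf [k [j [fk fj]]]]]].
exists j, k; move: (Hf j) (Hf k); rewrite !mxE => -> ->.
by move/negbTE: fj => ->; rewrite fk /=; lra.
Qed.

Definition t (x : vec) j := x 0 j - c0 0 j.
Definition Sg j := \sum_(z <- C) t z j.
Definition m0 x : 'I_(n.+1) := Order.arg_min ord0 xpredT (t x).
Definition a x : 'I_(n.+1) := Order.arg_max (m0 x) (fun j => t x j == t x (m0 x)) Sg.

Lemma A1 x k : t x (a x) <= t x k.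
Proof.
rewrite /a; case: Order.TotalTheory.arg_maxP => //= i /eqP -> _.
by rewrite /m0; case: Order.TotalTheory.arg_minP => //= i' _ ->.
Qed.

Lemma A2 x k : t x k <= t x (a x) -> Sg k <= Sg (a x).
Proof.
move=> H; have E : t x k == t x (m0 x).
  rewrite eq_le; apply/andP; split.
    by apply: le_trans H _; rewrite /a; case: Order.TotalTheory.arg_maxP => //= i /eqP ->.
  by rewrite /m0; case: Order.TotalTheory.arg_minP => //= i' _ ->.
by rewrite /a; case: Order.TotalTheory.arg_maxP => //= i _ ->.
Qed.


Lemma L x y j k : x \in C -> y \in C -> (forall l, t x j <= t x l) ->
  (forall l, t y j <= t y l) -> x 0 k - y 0 k < x 0 j - y 0 j ->
  t x k <= t x j /\ Sg j < Sg k.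
Proof.
move=> xC yC Hx Hy Hd.
have [b1 [b2 H1]] := Pd x y j k xC yC.
have [e1 [e2 H2]] := Pd y c0 k j yC c0C.
have hx := Hx k.
have E : t x k = t x j /\ t y k - t y j = 1 / 2.
  by move: hx; rewrite /t; case: b1 b2 e1 e2 H1 H2 Hd => [] [] [] [] /= H1 H2 Hd hx; lra.
split; first by case: E => -> _.
rewrite -subr_gt0 /Sg -sumrB.
have uC : uniq C by case: hC.
rewrite (bigD1_seq y) //=.
have : 0 <= \sum_(i <- C | i != y) (t i k - t i j).
  rewrite big_seq_cond; apply: sumr_ge0 => z /andP[zC _].
  have [g1 [g2 G1]] := Pd z x k j zC xC.
  have [h1 [h2 G2]] := Pd z y k j zC yC.
  move: E; rewrite /t; case: g1 g2 h1 h2 G1 G2 => [] [] [] [] /= G1 G2 [E1 E2]; lra.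
case: E => _ ->; lra.
Qed.

Lemma main x y : x \in C -> y \in C -> x != y ->
  x 0 (a x) - y 0 (a x) < x 0 (a y) - y 0 (a y).
Proof.
move=> xC yC nxy; rewrite ltNge; apply/negP => Hle.
have h1 := A1 x (a y). have h2 := A1 y (a x).
have [b1 [b2 H1]] := Pd x y (a x) (a y) xC yC.
have E : t x (a x) = t x (a y) /\ t y (a y) = t y (a x) /\
    x 0 (a x) - y 0 (a x) = x 0 (a y) - y 0 (a y).
  by move: h1 h2 Hle; rewrite /t; case: b1 b2 H1 => [] [] /= H1 h1 h2 Hle; lra.
case: E => E1 [E2 E3].
have [j [k Hjk]] := NC x y xC yC nxy.
have [Hk|Hk] := ltrP (x 0 j - y 0 j) (x 0 (a x) - y 0 (a x)).
  have [T1 T2] := L x y (a x) j xC yC (A1 x) (fun l => ltac:(rewrite -E2; exact: A1 y l)) Hk.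
  by have := A2 _ _ T1; rewrite leNgt T2.
have Hk' : y 0 k - x 0 k < y 0 (a y) - x 0 (a y) by lra.
have [T1 T2] := L y x (a y) k yC xC (A1 y) (fun l => ltac:(rewrite -E1; exact: A1 x l)) Hk'.
by have := A2 _ _ T1; rewrite leNgt T2.
Qed.


Definition Fs x := enum [pred f : {ffun 'I_(n.+1) -> bool} | ~~ f (a x)].

Lemma size_Fs x : size (Fs x) = (2 ^ n)%N.
Proof.
rewrite /Fs -cardE.
set i := a x.
pose g (f : {ffun 'I_(n.+1) -> bool}) := [ffun j => ~~ f j].
have gK : involutive g by move=> f; apply/ffunP => j; rewrite !ffunE negbK.
have H1 : #|[pred f : {ffun 'I_(n.+1) -> bool} | ~~ f i]| =
          #|[pred f : {ffun 'I_(n.+1) -> bool} | f i]|.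
  rewrite -(card_image (inv_inj gK)); apply: eq_card => f.
  rewrite inE; apply/imageP/idP => [[h]|fi].
    by rewrite inE => hi ->; rewrite ffunE.
  by exists (g f); rewrite ?inE ?ffunE ?negbK ?gK.
have H2 := cardC [pred f : {ffun 'I_(n.+1) -> bool} | f i].
rewrite card_ffun card_bool card_ord in H2.
have H3 : #|[predC [pred f : {ffun 'I_(n.+1) -> bool} | f i]]| =
          #|[pred f : {ffun 'I_(n.+1) -> bool} | ~~ f i]| by apply: eq_card.
rewrite H3 H1 expnS in H2.
rewrite H1; apply/eqP; rewrite -(eqn_pmul2l (_ : 0 < 2)%N) // mul2n -addnn H2.
by [].  
Qed.


Lemma hv_mem x f : f \in Fs x -> hv f \in 0 :: halfVP R n.
Proof.
rewrite /Fs mem_enum inE => fa.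
have [->|nf0] := eqVneq f [ffun => false].
  rewrite in_cons; apply/orP; left; apply/eqP/matrixP => i j.
  rewrite ord1 hvE !mxE ffunE big1 ?mul0r /= ?subrr ?mul0r //.
  by move=> k _; rewrite ffunE.
rewrite in_cons; apply/orP; right; apply: map_f.
rewrite /VP; apply: map_f; rewrite mem_filter mem_enum andbT nf0 /=.
by apply/eqP => E; move: fa; rewrite E ffunE.
Qed.

Lemma inj x y f g : x \in C -> y \in C -> f \in Fs x -> g \in Fs y ->
  x + hv f = y + hv g -> x = y /\ f = g.
Proof.
move=> xC yC; rewrite /Fs !mem_enum !inE => fa ga E.
have D j : x 0 j - y 0 j = hv g 0 j - hv f 0 j.
  have := congr1 (fun m : vec => m 0 j) E.
  rewrite [(x + _) 0 j]mxE [(y + _) 0 j]mxE => e; lra.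
have [exy|nxy] := eqVneq x y; last first.
  have := main x y xC yC nxy; rewrite !D !hvE.
  move/negbTE: fa => fa; move/negbTE: ga => ga; rewrite fa ga.
  move=> H; exfalso; move: H.
  set sf := (\sum_(i < n.+1) (f i)%:R) / n.+1%:R.
  set sg := (\sum_(i < n.+1) (g i)%:R) / n.+1%:R.
  by case: (f (a y)); case: (g (a x)); rewrite /=; lra.
subst y; split => //; apply/ffunP => j.
have Dj := D j; have Da := D (a x).
rewrite subrr in Dj Da.
move: Dj Da; rewrite !hvE; move/negbTE: fa => fa; move/negbTE: ga => ga.
rewrite fa ga.
set sf := (\sum_(i < n.+1) (f i)%:R) / n.+1%:R.
set sg := (\sum_(i < n.+1) (g i)%:R) / n.+1%:R.
by case: (f j); case: (g j); rewrite //=; lra.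
Qed.

Definition Lst := [seq x + hv f | x <- C, f <- Fs x].

Lemma Lst_uniq : uniq Lst.
Proof.
apply: allpairs_uniq_dep.
- by case: hC.
- by move=> x _; apply: enum_uniq.
move=> p q /allpairsPdep [x [f [xC fF ->]]] /allpairsPdep [y [g [yC gF ->]]] /= E.
by have [exy efg] := inj x y f g xC yC fF gF E; subst.
Qed.

Lemma Lst_sub : {subset Lst <= closedNbhd C}.
Proof.
move=> z /allpairsPdep [x [f [xC fF ->]]].
rewrite /closedNbhd mem_undup; apply: allpairs_f => //.
exact: hv_mem fF.
Qed.

Lemma size_Lst : size Lst = (size C * 2 ^ n)%N.
Proof.
rewrite /Lst size_allpairs_dep.
have H s : sumn [seq size (Fs x) | x <- s] = (size s * 2 ^ n)%N.
  by elim: s => //= x s IH; rewrite size_Fs IH mulSn.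
exact: H.
Qed.

Lemma key : (size C * 2 ^ n <= size (closedNbhd C))%N.
Proof. by rewrite -size_Lst; apply: uniq_leq_size; [exact: Lst_uniq | exact: Lst_sub]. Qed.

End S.

Theorem lemma12 (R : realType) (n : nat) (hn : (2 <= n)%N)
  (C : seq 'rV[R]_(n.+1)) (hC : clique C) :
  delta0 C <= ((2%:R : R) ^+ n)^-1.
Proof.
case E: C => [|c0 C'].
  by rewrite /delta0 /= mul0r invr_ge0 exprn_ge0.
rewrite -E.
have c0C : c0 \in C by rewrite E mem_head.
have K := @key R n C hC c0 c0C.
set N := size (closedNbhd C) in K *.
set m := size C in K *.
have m0 : (0 < m)%N by rewrite /m E.
have N0 : (0 < N)%N by apply: leq_trans K; rewrite muln_gt0 m0 expn_gt0.
have KR : (m%:R * 2 ^+ n <= N%:R :> R).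
  by rewrite -natrX -natrM ler_nat.
rewrite /delta0 -/m -/N ler_pdivrMr ?ltr0n //.
rewrite -(ler_pM2l (_ : 0 < 2 ^+ n :> R)) ?exprn_gt0 ?ltr0n //.
by rewrite mulrA mulfV ?mul1r ?expf_neq0 ?pnatr_eq0 // mulrC.
Qed.
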